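(* Let $n\ge 1$ and let $L=(l_{ij})$ be a real symmetric $n\times n$ matrix satisfying $l_{ii}=-\sum_{j\neq i} l_{ij}$ for $i=1,\dots,n$. Let $G$ be the weighted undirected graph with vertex set $\{1,\dots,n\}$ having an edge $\{i,j\}$ of weight $l_{ij}$ whenever $i\neq j$ and $l_{ij}\neq 0$ (and no other edges); $G$ may be disconnected. Let $G_+$ (resp. $G_-$) be the subgraph of $G$ with the same vertex set $\{1,\dots,n\}$ and only the edges of positive (resp. negative) weight. For a graph $H$ let $c(H)$ denote its number of connected components, and let $n_+(L)$, $n_-(L)$, $n_0(L)$ denote the numbers of positive, negative and zero eigenvalues of $L$, counted with multiplicity. Then \[ c(G_+)-c(G)\le n_+(L)\le n-c(G_-),\qquad c(G_-)-c(G)\le n_-(L)\le n-c(G_+), \] \[ c(G)\le n_0(L)\le n+2c(G)-c(G_+)-c(G_-). \]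
   Context: The matrix $L$ is what the paper calls a (weighted) Laplacian matrix of the graph $G$: the edge weights are the off-diagonal entries of $L$ and the diagonal entries are minus the row sums of the off-diagonal entries. Isolated vertices count as connected components. *)

(* Defs.v *)
From HB Require Import structures.
From mathcomp Require Import all_boot all_order all_algebra.
From mathcomp Require Import polyrcf.
From mathcomp Require Import reals.
Set Implicit Arguments. Unset Strict Implicit. Unset Printing Implicit Defensive.
Import Order.TTheory GRing.Theory Num.Theory.
Local Open Scope ring_scope.

Definition is_laplacian (R : realType) (n : nat) (L : 'M[R]_n) : Prop :=
  L^T = L /\ forall i : 'I_n, L i i = - \sum_(j < n | j != i) L i j.

Definition edgeG (R : realType) (n : nat) (L : 'M[R]_n) : rel 'I_n :=
  fun i j => (i != j) && (L i j != 0).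
Definition edgeGpos (R : realType) (n : nat) (L : 'M[R]_n) : rel 'I_n :=
  fun i j => (i != j) && (0 < L i j).
Definition edgeGneg (R : realType) (n : nat) (L : 'M[R]_n) : rel 'I_n :=
  fun i j => (i != j) && (L i j < 0).

(* number of connected components of the graph on 'I_n with edge relation e
   (isolated vertices count as components) *)
Definition ncomp (n : nat) (e : rel 'I_n) : nat := n_comp e 'I_n.

Definition n_pos (R : realType) (n : nat) (L : 'M[R]_n) : nat :=
  \sum_(x <- rootsR (char_poly L) | 0 < x) mup x (char_poly L).
Definition n_neg (R : realType) (n : nat) (L : 'M[R]_n) : nat :=
  \sum_(x <- rootsR (char_poly L) | x < 0) mup x (char_poly L).
Definition n_zero (R : realType) (n : nat) (L : 'M[R]_n) : nat :=
  mup 0 (char_poly L).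

(* Main.v *)
Require Import Defs.
From HB Require Import structures.
From mathcomp Require Import all_boot all_order all_algebra.
From mathcomp Require Import polyrcf.
From mathcomp Require Import reals.
From mathcomp Require Import complex spectral sesquilinear.
From mathcomp Require Import zify.
Import Order.TTheory GRing.Theory Num.Theory.
Local Open Scope ring_scope.
Set Implicit Arguments. Unset Strict Implicit. Unset Printing Implicit Defensive.
Definition Vmx (F : fieldType) (n : nat) (e : rel 'I_n) : 'M[F]_(#|fingraph.roots e|, n) :=
  \matrix_(k, j) ((fingraph.root e j == enum_val k)%:R).

Lemma ncompE n (e : rel 'I_n) : ncomp e = #|fingraph.roots e|.
Proof. by rewrite /ncomp /n_comp_mem; apply: eq_card => x; rewrite !inE andbT. Qed.

Lemma Vmx_rank (F : fieldType) n (e : rel 'I_n) : \rank (Vmx F e) = ncomp e.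
Proof.
rewrite ncompE; apply/eqP; apply: inj_row_free => v Hv.
apply/rowP => k; move/rowP: Hv => /(_ (enum_val k)); rewrite !mxE.
have rk : fingraph.root e (enum_val k) = enum_val k by apply/eqP; exact: (enum_valP k).
rewrite (bigD1 k) //= big1 ?addr0 => [|k' nk].
  by rewrite !mxE rk eqxx mulr1.
rewrite !mxE rk; case: eqP => [/enum_val_inj/eqP|]; last by rewrite mulr0.
by rewrite eq_sym (negbTE nk).
Qed.

Lemma Vmx_const (F : fieldType) n (e : rel 'I_n) (x : 'rV[F]_n) :
  connect_sym e -> (x <= Vmx F e)%MS -> forall i j, connect e i j -> x 0 i = x 0 j.
Proof.
move=> cs /submxP [z ->] i j cij; rewrite !mxE; apply: eq_bigr => k _.
by rewrite !mxE (fingraph.rootP cs cij).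
Qed.

Lemma const_connect n (e : rel 'I_n) (T : Type) (f : 'I_n -> T) :
  (forall i j, e i j -> f i = f j) -> forall i j, connect e i j -> f i = f j.
Proof.
move=> H i j /connectP [p pth ->]; elim: p i pth => //= k p IH i /andP [eik pth].
by rewrite (H _ _ eik) IH.
Qed.

Lemma Vmx_sub (F : fieldType) n (e : rel 'I_n) (x : 'rV[F]_n) :
  connect_sym e -> (forall i j, e i j -> x 0 i = x 0 j) -> (x <= Vmx F e)%MS.
Proof.
move=> cs H; apply/submxP; exists (\row_k x 0 (enum_val k)).
apply/rowP => j; rewrite !mxE.
have rj : fingraph.root e j \in fingraph.roots e by exact: fingraph.roots_root.
rewrite (bigD1 (enum_rank_in rj (fingraph.root e j))) //= big1 ?addr0 => [|k nk].
  rewrite !mxE enum_rankK_in // eqxx mulr1.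
  exact: (const_connect (f := fun i => x 0 i) H (fingraph.connect_root e j)).
rewrite !mxE; case: eqP => [E|]; last by rewrite mulr0.
by move/eqP: nk; case; apply: enum_val_inj; rewrite enum_rankK_in.
Qed.
From mathcomp Require Import ring.
Local Notation toC R := (real_complex R).

Lemma lap_sym (R : realType) n (L : 'M[R]_n) : is_laplacian L ->
  forall i j, L j i = L i j.
Proof. by case=> HT _ i j; rewrite -[in RHS]HT mxE. Qed.

Lemma lap_row0 (R : realType) n (L : 'M[R]_n) : is_laplacian L ->
  forall i, \sum_j L i j = 0.
Proof. by case=> _ H i; rewrite (bigD1 i) //= H addNr. Qed.

Definition Qf (R : realType) n (L : 'M[R]_n) (x : 'rV[R[i]]_n) : R[i] :=
  \sum_i \sum_j x 0 i * toC R (L i j) * (x 0 j)^*.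

Lemma Qf_id (R : realType) n (L : 'M[R]_n) (x : 'rV[R[i]]_n) : is_laplacian L ->
  Qf L x *+ 2 = \sum_i \sum_j (- toC R (L i j)) * ((x 0 i - x 0 j) * (x 0 i - x 0 j)^*).
Proof.
move=> HL; have sym := lap_sym HL; have r0 := lap_row0 HL.
have E : forall (l a b : R[i]), - l * ((a - b) * (a - b)^*) =
   (a * l * b^* + b * l * a^*) - (l * (a * a^*) + l * (b * b^*)).
  by move=> l a b; rewrite rmorphB /=; ring.
under eq_bigr do under eq_bigr do rewrite E.
under eq_bigr do rewrite sumrB !big_split /=.
rewrite sumrB !big_split /=.
have S1 : \sum_i \sum_j toC R (L i j) * (x 0 i * (x 0 i)^*) = 0.
  apply: big1 => i _; rewrite -big_distrl /= -rmorph_sum r0 rmorph0 mul0r //.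
have S2 : \sum_i \sum_j toC R (L i j) * (x 0 j * (x 0 j)^*) = 0.
  rewrite exchange_big; apply: big1 => j _; rewrite -big_distrl /=.
  under eq_bigr do rewrite -sym.
  by rewrite -rmorph_sum r0 rmorph0 mul0r.
have S3 : \sum_i \sum_j x 0 j * toC R (L i j) * (x 0 i)^* = Qf L x.
  rewrite exchange_big; apply: eq_bigr => j _; apply: eq_bigr => i _.
  by rewrite sym.

by rewrite S1 S2 S3 addr0 subr0 mulr2n.
Qed.

Lemma Qf_ge0 (R : realType) n (L : 'M[R]_n) (x : 'rV[R[i]]_n) : is_laplacian L ->
  (forall i j, 0 < L i j -> x 0 i = x 0 j) ->
  0 <= Qf L x /\ (Qf L x = 0 -> forall i j, L i j < 0 -> x 0 i = x 0 j).
Proof.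
move=> HL H.
have T : forall i j, 0 <= (- toC R (L i j)) * ((x 0 i - x 0 j) * (x 0 i - x 0 j)^*).
  move=> i j; case: (ltrgt0P (L i j)) => [/H ->|hl|->].
  - by rewrite subrr mul0r mulr0.
  - by apply: mulr_ge0; [rewrite oppr_ge0 -(rmorph0 (toC R)) lecR ltW | exact: mul_conjC_ge0].
  - by rewrite rmorph0 oppr0 mul0r.
have Q2 : 0 <= Qf L x *+ 2 by rewrite Qf_id //; apply: sumr_ge0 => i _; apply: sumr_ge0.
split; first by rewrite pmulrn_lge0 in Q2.
move=> Q0 i j hl.
have /eqP : Qf L x *+ 2 = 0 by rewrite Q0 mul0rn.
rewrite Qf_id // psumr_eq0 => [|k _]; last by apply: sumr_ge0.
move=> /allP /(_ i (mem_index_enum _)) /= /eqP S0.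
move: (@psumr_eq0P _ _ _ _ (fun k _ => T i k) S0 j isT) => /eqP.
rewrite mulf_eq0 oppr_eq0 -(rmorph0 (toC R)) (inj_eq (@complexI R)) (lt_eqF hl) /=.
by rewrite mul_conjC_eq0 subr_eq0 => /eqP.
Qed.

Lemma Qf_le0 (R : realType) n (L : 'M[R]_n) (x : 'rV[R[i]]_n) : is_laplacian L ->
  (forall i j, L i j < 0 -> x 0 i = x 0 j) -> Qf L x <= 0.
Proof.
move=> HL H.
have Q2 : 0 <= - (Qf L x *+ 2).
  rewrite Qf_id // -sumrN; apply: sumr_ge0 => i _; rewrite -sumrN; apply: sumr_ge0 => j _.
  case: (ltrgt0P (L i j)) => [hl|/H ->|->].
  - rewrite mulNr opprK; apply: mulr_ge0; last exact: mul_conjC_ge0.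
    by rewrite -(rmorph0 (toC R)) lecR ltW.
  - by rewrite subrr mul0r mulr0 oppr0.
  - by rewrite rmorph0 oppr0 mul0r oppr0.
by rewrite -oppr_ge0 -(@pmulrn_lge0 _ _ 2) // mulNrn.
Qed.
Notation "M ^t*" := ((M ^t* )%sesqui) (at level 30, only parsing) : ring_scope.

Lemma Qf_mx (R : realType) n (L : 'M[R]_n) (x : 'rV[R[i]]_n) :
  Qf L x = (x *m map_mx (toC R) L *m (x ^t* )%sesqui) 0 0.
Proof.
rewrite /Qf mxE exchange_big; apply: eq_bigr => j _; rewrite !mxE big_distrl /=.
by apply: eq_bigr => i _; rewrite !mxE.
Qed.

Lemma ker_Lc (R : realType) n (L : 'M[R]_n) (x : 'rV[R[i]]_n) : is_laplacian L ->
  (forall i j, edgeG L i j -> x 0 i = x 0 j) -> x *m map_mx (toC R) L = 0.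
Proof.
move=> HL H; apply/rowP => j; rewrite !mxE.
transitivity (\sum_i x 0 j * toC R (L i j)).
  apply: eq_bigr => i _; rewrite mxE.
  have [->|nij] := eqVneq i j; first by [].
  have [->|nL] := eqVneq (L i j) 0; first by rewrite rmorph0 !mulr0.
  by rewrite (H i j) // /edgeG nij nL.
rewrite -big_distrr /= -rmorph_sum.
under eq_bigr do rewrite -(lap_sym HL).
by rewrite lap_row0 // rmorph0 mulr0.
Qed.

Definition Emx n (S : pred 'I_n) (F : fieldType) : 'M[F]_(#|S|, n) :=
  \matrix_(k, i) ((enum_val k == i)%:R).

Lemma Emx_rank n (S : pred 'I_n) (F : fieldType) : \rank (Emx S F) = #|S|.
Proof.
apply/eqP; apply: inj_row_free => v Hv.
apply/rowP => k; move/rowP: Hv => /(_ (enum_val k)); rewrite !mxE.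
rewrite (bigD1 k) //= big1 ?addr0 => [|k' nk].
  by rewrite !mxE eqxx mulr1.
rewrite !mxE; case: eqP => [/enum_val_inj/eqP|]; last by rewrite mulr0.
by rewrite (negbTE nk).
Qed.

Lemma Emx_supp n (S : pred 'I_n) (F : fieldType) (w : 'rV[F]_#|S|) i :
  i \notin S -> (w *m Emx S F) 0 i = 0.
Proof.
move=> nS; rewrite mxE; apply: big1 => k _; rewrite mxE.
case: eqP => [E|]; last by rewrite mulr0.
by move: (enum_valP k); rewrite E (negbTE nS).
Qed.

Lemma cap_bound (F : fieldType) n m1 m2 m3 (W : 'M[F]_(m1,n)) (N : 'M_(m2,n))
  (V : 'M_(m3,n)) :
  (forall x : 'rV_n, (x <= W)%MS -> (x <= N)%MS -> (x <= V)%MS) ->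
  (\rank W + \rank N <= n + \rank V)%N.
Proof.
move=> H; rewrite -mxrank_sum_cap leq_add ?rank_leq_col //.
apply: mxrankS; apply/row_subP => i; apply: H.
  by apply: submx_trans (capmxSl W N); exact: row_sub.
by apply: submx_trans (capmxSr W N); exact: row_sub.
Qed.
Lemma mulmx_conjK (R : realType) n (P D : 'M[R[i]]_n) (z : 'rV[R[i]]_n) :
  P \is unitarymx -> z *m P *m (invmx P *m D *m P) = z *m D *m P.
Proof.
move=> Pu; have Pi := unitarymx_unit Pu.
by rewrite !mulmxA mulmxK.
Qed.

Lemma Qf_diag (R : realType) n (L : 'M[R]_n) (P : 'M[R[i]]_n) (r : 'I_n -> R)
  (z : 'rV[R[i]]_n) :
  P \is unitarymx ->
  map_mx (toC R) L = invmx P *m diag_mx (\row_i toC R (r i)) *m P ->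
  Qf L (z *m P) = \sum_i toC R (r i) * (z 0 i * (z 0 i)^*).
Proof.
move=> Pu HLc; rewrite Qf_mx HLc invmx_unitary //.
have /unitarymxP PP := Pu. 
have -> : ((z *m P) ^t* )%sesqui = (P ^t* )%sesqui *m (z ^t* )%sesqui.
  by rewrite trmx_mul map_mxM.
rewrite !mulmxA -(mulmxA z) PP mulmx1 -(mulmxA _ P) PP mulmx1.
rewrite mxE; apply: eq_bigr => i _; rewrite mul_mx_diag !mxE.

by rewrite mulrCA mulrA.
Qed.

Lemma ker_diag (R : realType) n (L : 'M[R]_n) (P : 'M[R[i]]_n) (r : 'I_n -> R)
  (z : 'rV[R[i]]_n) :
  P \is unitarymx ->
  map_mx (toC R) L = invmx P *m diag_mx (\row_i toC R (r i)) *m P ->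
  z *m P *m map_mx (toC R) L = 0 -> forall i, z 0 i * toC R (r i) = 0.
Proof.
move=> Pu HLc; rewrite HLc mulmx_conjK // => /(congr1 (mulmx^~ (invmx P))).
rewrite mulmxK ?unitarymx_unit // mul0mx mul_mx_diag => /matrixP H i.
by move: (H 0 i); rewrite !mxE.
Qed.
Lemma edge_sym (R : realType) n (L : 'M[R]_n) : is_laplacian L ->
  [/\ connect_sym (edgeG L), connect_sym (edgeGpos L) & connect_sym (edgeGneg L)].
Proof.
move=> HL; have S := lap_sym HL.
by split; apply: sym_connect_sym => i j;
  rewrite /edgeG /edgeGpos /edgeGneg eq_sym S.
Qed.

Lemma Nmx_rank (R : realType) n (P : 'M[R[i]]_n) (S : pred 'I_n) :
  P \is unitarymx -> \rank (Emx S _ *m P) = #|S|.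
Proof.
move=> Pu; rewrite mxrankMfree ?Emx_rank //.
by rewrite row_free_unit unitarymx_unit.
Qed.

Lemma Nmx_sub (R : realType) n (P : 'M[R[i]]_n) (S : pred 'I_n) (x : 'rV[R[i]]_n) :
  (x <= Emx S _ *m P)%MS -> exists z : 'rV[R[i]]_n,
    x = z *m P /\ forall i, i \notin S -> z 0 i = 0.
Proof.
move/submxP => [w ->]; exists (w *m Emx S _); split; first by rewrite mulmxA.
by move=> i; apply: Emx_supp.
Qed.

Lemma core (R : realType) n (L : 'M[R]_n) (P : 'M[R[i]]_n) (r : 'I_n -> R) :
 is_laplacian L -> P \is unitarymx ->
 map_mx (toC R) L = invmx P *m diag_mx (\row_i toC R (r i)) *m P ->
 [/\ (ncomp (edgeGpos L) + #|[pred i | (r i <= 0)%R]| <= n + ncomp (edgeG L))%N,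
     (ncomp (edgeGneg L) + #|[pred i | (0 < r i)%R]| <= n)%N &
     (ncomp (edgeG L) + #|[pred i | (r i != 0)%R]| <= n)%N].
Proof.
move=> HL Pu HLc; have [sG sGp sGn] := edge_sym HL.
have z0 : forall z : 'rV[R[i]]_n, (forall i, z 0 i = 0) -> z *m P = 0.
  move=> z H; have -> : z = 0 by apply/rowP => i; rewrite H mxE.
  by rewrite mul0mx.
split.
- have := @cap_bound _ _ _ _ _ (Vmx R[i] (edgeGpos L))
     (Emx [pred i | (r i <= 0)%R] _ *m P) (Vmx R[i] (edgeG L)).
  rewrite !Vmx_rank Nmx_rank //; apply => x xW /Nmx_sub [z [xz zS]].
  have cp := Vmx_const sGp xW.
  have pc : forall i j, (0 < L i j)%R -> x 0 i = x 0 j.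
    move=> i j h; have [->|nij] := eqVneq i j => //; apply: cp; apply: connect1.
    by rewrite /edgeGpos nij h.
  have [Qge0 Q0] := Qf_ge0 HL pc.
  have Qle0 : (Qf L x <= 0)%R.
    rewrite xz (Qf_diag _ Pu HLc); apply: sumr_le0 => i _.
    case: (boolP (i \in [pred i | (r i <= 0)%R])) => [|/zS ->]; last by rewrite mul0r mulr0.
    rewrite inE => ri; apply: mulr_le0_ge0; last exact: mul_conjC_ge0.
    by rewrite -(rmorph0 (toC R)) lecR.
  have nc := Q0 (le_anti (introT andP (conj Qle0 Qge0))).
  apply: Vmx_sub => // i j /andP [nij nL].
  by case: (ltrgt0P (L i j)) nL => h nL; first [exact: nc h | exact: pc h | done].
- have := @cap_bound _ _ _ _ _ (Vmx R[i] (edgeGneg L))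
     (Emx [pred i | (0 < r i)%R] _ *m P) (0 : 'M[R[i]]_(1, n)).
  rewrite !Vmx_rank Nmx_rank // mxrank0 addn0; apply => x xW /Nmx_sub [z [xz zS]].
  have cp := Vmx_const sGn xW.
  have pc : forall i j, (L i j < 0)%R -> x 0 i = x 0 j.
    move=> i j h; have [->|nij] := eqVneq i j => //; apply: cp; apply: connect1.
    by rewrite /edgeGneg nij h.
  have Qle0 := Qf_le0 HL pc.
  have T : forall i, (0 <= toC R (r i) * (z 0 i * (z 0 i)^* ))%R.
    move=> i; case: (boolP (i \in [pred i | (0 < r i)%R])) => [|/zS ->]; last by rewrite mul0r mulr0.
    rewrite inE => ri; apply: mulr_ge0; last exact: mul_conjC_ge0.
    by rewrite -(rmorph0 (toC R)) lecR ltW.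
  have Qge0 : (0 <= Qf L x)%R by rewrite xz (Qf_diag _ Pu HLc); apply: sumr_ge0 => i _.
  have Q0 := le_anti (introT andP (conj Qle0 Qge0)).
  rewrite xz (Qf_diag _ Pu HLc) in Q0.
  suff -> : x = 0 by exact: sub0mx.
  rewrite xz; apply: z0 => i.
  case: (boolP (i \in [pred i | (0 < r i)%R])) => [|/zS //].
  rewrite inE => ri; move: (@psumr_eq0P _ _ _ _ (fun k _ => T k) Q0 i isT) => /eqP.
  rewrite mulf_eq0 mul_conjC_eq0 -(rmorph0 (toC R)) (inj_eq (@complexI R)) (gt_eqF ri) /=.
  by move/eqP.
- have := @cap_bound _ _ _ _ _ (Vmx R[i] (edgeG L))
     (Emx [pred i | (r i != 0)%R] _ *m P) (0 : 'M[R[i]]_(1, n)).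
  rewrite !Vmx_rank Nmx_rank // mxrank0 addn0; apply => x xW /Nmx_sub [z [xz zS]].
  have cp := Vmx_const sG xW.
  have K := ker_Lc HL (fun i j h => cp i j (connect1 h)).
  rewrite xz in K; have K2 := ker_diag Pu HLc K.
  suff -> : x = 0 by exact: sub0mx.
  rewrite xz; apply: z0 => i.
  case: (boolP (i \in [pred i | (r i != 0)%R])) => [|/zS //].
  rewrite inE => ri; move/eqP: (K2 i).
  rewrite mulf_eq0 -(rmorph0 (toC R)) (inj_eq (@complexI R)) (negbTE ri) orbF.
  by move/eqP.
Qed.
Lemma char_poly_conj (F : fieldType) n (P A : 'M[F]_n) : P \in unitmx ->
  char_poly (invmx P *m A *m P) = char_poly A.
Proof.
move=> Pu; rewrite /char_poly /char_poly_mx.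
have QP : map_mx polyC (invmx P) *m map_mx polyC P = 1%:M.
  by rewrite -map_mxM mulVmx // map_mx1.
have -> : ('X%:M : 'M[{poly F}]_n) - map_mx polyC (invmx P *m A *m P) =
   map_mx polyC (invmx P) *m ('X%:M - map_mx polyC A) *m map_mx polyC P.
  by rewrite mulmxBr mulmxBl scalar_mxC -(mulmxA _ (map_mx polyC (invmx P))) QP mulmx1 !map_mxM.
rewrite !det_mulmx mulrC mulrA -det_mulmx -map_mxM mulmxV // map_mx1 det1 mul1r //.
Qed.
Lemma sum_count (T : eqType) (u s : seq T) (P : pred T) : uniq u -> {subset s <= u} ->
  (\sum_(x <- u | P x) count_mem x s)%N = count P s.
Proof.
move=> uu; elim: s => [|y s IH] sub /=; first by rewrite big1.
under eq_bigr do rewrite /= .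
rewrite big_split /= IH; last by move=> x xs; apply: sub; rewrite inE xs orbT.
congr (_ + _)%N.
transitivity (\sum_(x <- filter P u | y == x) 1)%N.
  rewrite big_filter_cond big_mkcondr /=; apply: eq_bigr => x _; by case: eqP.
rewrite sum1_count (@eq_count _ _ (pred1 y)) => [|x]; last by rewrite /= eq_sym.
rewrite count_uniq_mem ?filter_uniq // mem_filter.
by rewrite (sub y (mem_head _ _)) andbT.
Qed.

Lemma card_add n (A B C : 'I_n -> bool) : (forall i, (C i : nat) = A i + B i)%N ->
  #|[pred i | C i]| = (#|[pred i | A i]| + #|[pred i | B i]|)%N.
Proof.
move=> H; rewrite -!sum1_card.
rewrite [X in X = _]big_mkcond [X in _ = (X + _)%N]big_mkcond.
rewrite [X in _ = (_ + X)%N]big_mkcond -big_split /=.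
by apply: eq_bigr => i _; rewrite !inE; move: (H i); do 3 case: (_ i).
Qed.

Lemma card_all n (A : 'I_n -> bool) : (forall i, A i) -> #|[pred i | A i]| = n.
Proof.
move=> H; rewrite -[RHS]card_ord; apply: eq_card => i; by rewrite !inE H.
Qed.

Lemma card_count n (R : eqType) (r : 'I_n -> R) (P : pred R) :
  count P [seq r i | i <- index_enum 'I_n] = #|[pred i | P (r i)]|.
Proof. by rewrite count_map -sum1_count sum1_card. Qed.
Lemma ncomp_eq n (e e' : rel 'I_n) : e =2 e' -> ncomp e = ncomp e'.
Proof. by move=> H; rewrite !ncompE; apply: eq_card; apply: eq_roots. Qed.

Theorem theorem4p1 (R : realType) (n : nat) (L : 'M[R]_n) :
  (0 < n)%N -> is_laplacian L ->
  ((ncomp (edgeGpos L) <= n_pos L + ncomp (edgeG L))%N /\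
      (n_pos L + ncomp (edgeGneg L) <= n)%N /\
      (ncomp (edgeGneg L) <= n_neg L + ncomp (edgeG L))%N /\
      (n_neg L + ncomp (edgeGpos L) <= n)%N /\
      (ncomp (edgeG L) <= n_zero L)%N /\
      (n_zero L + ncomp (edgeGpos L) + ncomp (edgeGneg L) <= n + 2 * ncomp (edgeG L))%N).
Proof.
move=> n0 HL.
have Lh : map_mx (toC R) L \is hermsymmx.
  apply/is_hermitianmxP; rewrite expr0 scale1r; apply/matrixP => i j; rewrite !mxE.
  rewrite (lap_sym HL i j).
  by apply/esym/CrealP/complex_realP; exists (L i j).
have /orthomx_spectralP HLc := hermitian_normalmx Lh.
have dr := hermitian_spectral_diag_real Lh.
have Pu := spectral_unitarymx (map_mx (toC R) L).
set P := spectralmx _ in HLc Pu.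
pose r := fun i => complex.Re (spectral_diag (map_mx (toC R) L) 0 i).
have dE : spectral_diag (map_mx (toC R) L) = \row_i toC R (r i).
  by apply/rowP => i; rewrite mxE /r RRe_real //; exact: (mxOverP dr 0 i).
rewrite dE in HLc.
have [c1 c2 c3] := core HL Pu HLc.
have HLn : is_laplacian (- L).
  split; first by apply/matrixP => i j; rewrite !mxE (lap_sym HL).
  move=> i; rewrite mxE (HL.2 i); under [in RHS]eq_bigr do rewrite mxE.
  by rewrite sumrN.
have HLcn : map_mx (toC R) (- L) = invmx P *m diag_mx (\row_i toC R (- r i)) *m P.
  have -> : diag_mx (\row_i toC R (- r i)) = - diag_mx (\row_i toC R (r i)).
    by apply/matrixP => i j; rewrite !mxE rmorphN mulNrn.
  by rewrite map_mxN HLc mulmxN mulNmx.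
have [c1' c2' c3'] := core HLn Pu HLcn.
have eGp : ncomp (edgeGpos (- L)) = ncomp (edgeGneg L).
  by apply: ncomp_eq => i j; rewrite /edgeGpos /edgeGneg mxE oppr_gt0.
have eGn : ncomp (edgeGneg (- L)) = ncomp (edgeGpos L).
  by apply: ncomp_eq => i j; rewrite /edgeGpos /edgeGneg mxE oppr_lt0.
have eG : ncomp (edgeG (- L)) = ncomp (edgeG L).
  by apply: ncomp_eq => i j; rewrite /edgeG mxE oppr_eq0.
rewrite eGp eGn eG in c1' c2' c3'.
have k1 : #|[pred i | (- r i <= 0)%R]| = #|[pred i | (0 <= r i)%R]|.
  by apply: eq_card => i; rewrite !inE oppr_le0.
have k2 : #|[pred i | (0 < - r i)%R]| = #|[pred i | (r i < 0)%R]|.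
  by apply: eq_card => i; rewrite !inE oppr_gt0.
rewrite k1 in c1'; rewrite k2 in c2'.
pose s := [seq r i | i <- index_enum 'I_n].
have cp : char_poly L = \prod_(y <- s) ('X - y%:P).
  apply: (@map_poly_inj _ _ (toC R)).
  rewrite map_char_poly HLc char_poly_conj ?unitarymx_unit //.
  rewrite char_poly_trig ?diag_mx_is_trig // rmorph_prod big_map.
  by apply: eq_bigr => i _; rewrite rmorphB /= map_polyX map_polyC !mxE eqxx mulr1n.
have mu : forall x, mup x (char_poly L) = count_mem x s.
  by move=> x; rewrite cp mu_prod_XsubC.
have p0 : char_poly L != 0 := monic_neq0 (char_poly_monic L).
have sub : {subset s <= rootsR (char_poly L)}.
  move=> x xs; rewrite -(roots_on_rootsR p0) in_itv /= cp root_prod_XsubC //.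
have uu : uniq (rootsR (char_poly L)) := uniq_roots _ _ _.
have -> : n_pos L = #|[pred i | (0 < r i)%R]|.
  rewrite /n_pos; under eq_bigr => x _ do rewrite mu.
  by rewrite sum_count // card_count.
have -> : n_neg L = #|[pred i | (r i < 0)%R]|.
  rewrite /n_neg; under eq_bigr => x _ do rewrite mu.
  by rewrite sum_count // card_count.
have -> : n_zero L = #|[pred i | r i == 0]|.
  by rewrite /n_zero mu card_count.
have e1 : #|[pred i | (r i <= 0)%R]| = (#|[pred i | (r i < 0)%R]| + #|[pred i | (r i == 0)%R]|)%N.
  by apply: card_add => i; case: ltrgt0P.
have e2 : #|[pred i | (0 <= r i)%R]| = (#|[pred i | (0 < r i)%R]| + #|[pred i | (r i == 0)%R]|)%N.
  by apply: card_add => i; case: ltrgt0P.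
have e3 : #|[pred i | (r i != 0)%R]| = (#|[pred i | (0 < r i)%R]| + #|[pred i | (r i < 0)%R]|)%N.
  by apply: card_add => i; case: ltrgt0P.
have e4 : #|[pred i : 'I_n | true]| = (#|[pred i | (r i != 0)%R]| + #|[pred i | (r i == 0)%R]|)%N.
  by apply: card_add => i; case: ltrgt0P.
have e5 : #|[pred i : 'I_n | true]| = n by apply: card_all.
move: c1 c2 c3 c1' c2' e1 e2 e3 e4 e5.
set a := #|[pred i | (0 < r i)%R]|.
set b := #|[pred i | (r i < 0)%R]|.
set z := #|[pred i | (r i == 0)%R]|.
set a0 := #|[pred i | (0 <= r i)%R]|.
set b0 := #|[pred i | (r i <= 0)%R]|.
set nz := #|[pred i | (r i != 0)%R]|.
set t := #|[pred i : 'I_n | true]|.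
set G := ncomp (edgeG L). set Gp := ncomp (edgeGpos L). set Gn := ncomp (edgeGneg L).
move=> *; lia.
Qed.
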